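(* Let $G$ be a locally finite graph with graph metric $d$, $h$ an even positive integer and $R$ a positive integer. Let $S_1\subseteq V(G)$ be such that distinct elements of $S_1$ are at $d$-distance greater than $h$ and every vertex is at $d$-distance at most $h$ from $S_1$; let $\ell_1:S_1\to[0,1/2]$ be injective, let $\mathcal V_1(v)$ be the unique $s\in S_1$ minimizing $d(v,s)+\ell_1(s)$, and $V_{1,s}=\{v:\mathcal V_1(v)=s\}$. Let $\Gamma$ be the graph on vertex set $S_1$ in which distinct $s,s'$ are adjacent iff some edge of $G$ joins $V_{1,s}$ and $V_{1,s'}$, with graph metric $d_\Gamma$. Let $S_2\subseteq S_1$ be such that distinct elements of $S_2$ are at $d_\Gamma$-distance greater than $R$ and every element of $S_1$ is at $d_\Gamma$-distance at most $R$ from $S_2$; let $\ell_2:S_2\to[0,1/2]$ be injective, and for $s'\in S_1$ let $\mathcal V_2(s')$ be the unique $s\in S_2$ minimizing $d_\Gamma(s',s)+\ell_2(s)$. For $s\in S_2$ set $V_{2,s}=\{v\in V(G):\mathcal V_2(\mathcal V_1(v))=s\}$. Then for every $s\in S_2$, the induced subgraph $G[V_{2,s}]$ is connected and contains every vertex at $d$-distance at most $\lfloor R/2\rfloor-h$ from $s$. *)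

(* Defs.v *)
From Stdlib Require Import Reals ZArith Arith List Lia Lra.
Open Scope R_scope.

Section Graphs.
Variable V : Type.

Definition simple_graph (adj : V -> V -> Prop) : Prop :=
  (forall u v, adj u v -> adj v u) /\ (forall v, ~ adj v v).

Definition locally_finite (adj : V -> V -> Prop) : Prop :=
  forall v, exists l : list V, forall u, adj v u -> In u l.

Inductive walk (adj : V -> V -> Prop) : V -> V -> nat -> Prop :=
| walk_nil : forall v, walk adj v v 0
| walk_cons : forall u w v n, adj u w -> walk adj w v n -> walk adj u v (S n).

Definition dist_le (adj : V -> V -> Prop) (u v : V) (n : nat) : Prop :=
  exists m, (m <= n)%nat /\ walk adj u v m.

(* d(u,v) = n (graph metric; no such n when u,v are in different components) *)
Definition is_dist (adj : V -> V -> Prop) (u v : V) (n : nat) : Prop :=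
  dist_le adj u v n /\ forall m, dist_le adj u v m -> (n <= m)%nat.

Definition vor_min (adj : V -> V -> Prop) (S : V -> Prop) (l : V -> R)
  (v s : V) : Prop :=
  S s /\ exists n, is_dist adj v s n /\
    forall s' n', S s' -> is_dist adj v s' n' -> INR n + l s <= INR n' + l s'.

Definition cell_graph (adj : V -> V -> Prop) (S1 : V -> Prop) (l1 : V -> R)
  (s s' : V) : Prop :=
  S1 s /\ S1 s' /\ s <> s' /\
  exists u w, vor_min adj S1 l1 u s /\ vor_min adj S1 l1 w s' /\ adj u w.

Definition cell2 (adj : V -> V -> Prop) (S1 : V -> Prop) (l1 : V -> R)
  (S2 : V -> Prop) (l2 : V -> R) (s v : V) : Prop :=
  exists s1, vor_min adj S1 l1 v s1 /\ vor_min (cell_graph adj S1 l1) S2 l2 s1 s.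

Definition induced (adj : V -> V -> Prop) (P : V -> Prop) (u w : V) : Prop :=
  adj u w /\ P u /\ P w.

Definition connected_in (adj : V -> V -> Prop) (P : V -> Prop) : Prop :=
  forall u w, P u -> P w -> exists n, walk (induced adj P) u w n.

Definition separated (adj : V -> V -> Prop) (S : V -> Prop) (h : nat) : Prop :=
  forall s s', S s -> S s' -> s <> s' -> ~ dist_le adj s s' h.
Definition net_covering (adj : V -> V -> Prop) (D S : V -> Prop) (h : nat) : Prop :=
  forall v, D v -> exists s, S s /\ dist_le adj v s h.

Definition good_label (S : V -> Prop) (l : V -> R) : Prop :=
  (forall s, S s -> 0 <= l s <= 1/2) /\
  (forall s s', S s -> S s' -> l s = l s' -> s = s').

End Graphs.
Arguments walk {V}.
Arguments dist_le {V}.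
Arguments is_dist {V}.
Arguments vor_min {V}.
Arguments cell_graph {V}.
Arguments cell2 {V}.
Arguments induced {V}.
Arguments connected_in {V}.
Arguments separated {V}.
Arguments net_covering {V}.
Arguments good_label {V}.
Arguments simple_graph {V}.
Arguments locally_finite {V}.

(* Main.v *)
Require Import Defs.
From Stdlib Require Import Reals ZArith Arith List.
From Stdlib Require Import Lia Lra Classical.
Open Scope R_scope.

Lemma walk_app {V} (a : V -> V -> Prop) u v w m k :
  walk a u v m -> walk a v w k -> walk a u w (m + k).
Proof. induction 1; simpl; intros; auto. econstructor; eauto. Qed.

Lemma walk_0_inv {V} (a : V -> V -> Prop) u v : walk a u v 0 -> u = v.
Proof. intros W; inversion W; auto. Qed.

Lemma walk_S_inv {V} (a : V -> V -> Prop) u v n :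
  walk a u v (S n) -> exists w, a u w /\ walk a w v n.
Proof. intros W; inversion W; subst; eauto. Qed.

Lemma walk_rev {V} (a : V -> V -> Prop) (sym : forall x y, a x y -> a y x) u v m :
  walk a u v m -> walk a v u m.
Proof.
  induction 1. constructor.
  replace (S n) with (n + 1)%nat by lia. apply walk_app with w; auto.
  econstructor; [apply sym; eauto | constructor].
Qed.

Lemma walk_mono {V} (a b : V -> V -> Prop) (H : forall x y, a x y -> b x y) u v m :
  walk a u v m -> walk b u v m.
Proof. induction 1; econstructor; eauto. Qed.

Lemma dist_le_mono {V} (a : V -> V -> Prop) u v m k :
  dist_le a u v m -> (m <= k)%nat -> dist_le a u v k.
Proof. intros [j [Hj W]] H; exists j; split; auto; lia. Qed.

Lemma dist_exists {V} (a : V -> V -> Prop) u v k :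
  dist_le a u v k -> exists n, is_dist a u v n.
Proof.
  revert u v; induction k; intros u v D.
  - exists 0%nat; split; auto; intros; lia.
  - destruct (classic (dist_le a u v k)) as [H|H]; auto.
    exists (S k); split; auto. intros m Hm.
    destruct (le_lt_dec m k); [|lia]. exfalso; apply H; eapply dist_le_mono; eauto.
Qed.

Lemma is_dist_walk {V} (a : V -> V -> Prop) u v n : is_dist a u v n -> walk a u v n.
Proof.
  intros [[m [Hm W]] Hmin].
  assert (n <= m)%nat by (apply Hmin; exists m; split; auto).
  replace n with m by lia; auto.
Qed.

Lemma is_dist_unique {V} (a : V -> V -> Prop) u v n n' :
  is_dist a u v n -> is_dist a u v n' -> n = n'.
Proof.
  intros [D H] [D' H']. specialize (H _ D'); specialize (H' _ D); lia.
Qed.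

Lemma induced_sym {V} (a : V -> V -> Prop) P (sym : forall x y, a x y -> a y x) :
  forall x y, induced a P x y -> induced a P y x.
Proof. intros x y [A [B C]]; split; auto. Qed.

Lemma geo {V} (a : V -> V -> Prop) SS l s : forall m v,
  walk a v s m -> is_dist a v s m -> vor_min a SS l v s ->
  walk (induced a (fun x => vor_min a SS l x s)) v s m.
Proof.
  induction m; intros v W D Vm.
  - apply walk_0_inv in W; subst; constructor.
  - destruct (walk_S_inv _ _ _ _ W) as [w [Hvw Ww]].
    assert (Dw : is_dist a w s m).
    { split. exists m; split; auto.
      intros k [k' [Hk Wk]].
      assert (S m <= S k')%nat. { apply (proj2 D). exists (S k'); split; auto. econstructor; eauto. }
      lia. }
    assert (Vw : vor_min a SS l w s).
    { destruct Vm as [Ss [n0 [Dn0 Hmin]]]. split; auto. exists m; split; auto.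
      intros t n' St Dt.
      pose proof (is_dist_unique _ _ _ _ _ Dn0 D); subst n0.
      assert (Dvt : dist_le a v t (S n')).
      { exists (S n'); split; auto. econstructor; eauto. apply is_dist_walk; auto. }
      destruct (dist_exists _ _ _ _ Dvt) as [n'' Dn''].
      pose proof (Hmin t n'' St Dn'').
      assert (n'' <= S n')%nat by (apply (proj2 Dn''); auto).
      apply le_INR in H0. rewrite S_INR in H, H0. lra. }
    econstructor. split; [exact Hvw | split; auto]. apply IHm; auto.
Qed.

Lemma vor_self {V} (a : V -> V -> Prop) SS l s :
  good_label SS l -> SS s -> vor_min a SS l s s.
Proof.
  intros [Hb Hi] Ss. split; auto. exists 0%nat. split.
  - split. exists 0%nat; split; auto; constructor. intros; lia.
  - intros t n' St Dt. destruct n'.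
    + apply is_dist_walk, walk_0_inv in Dt; subst; lra.
    + rewrite S_INR. pose proof (pos_INR n'). simpl.
      destruct (Hb s Ss); destruct (Hb t St); lra.
Qed.

Lemma vor_unique {V} (a : V -> V -> Prop) SS l u p q :
  good_label SS l -> vor_min a SS l u p -> vor_min a SS l u q -> p = q.
Proof.
  intros [Hb Hi] [Sp [np [Dp Hp]]] [Sq [nq [Dq Hq]]].
  specialize (Hp q nq Sq Dq). specialize (Hq p np Sp Dp).
  destruct (Hb p Sp) as [Hp1 Hp2]; destruct (Hb q Sq) as [Hq1 Hq2].
  destruct (lt_eq_lt_dec np nq) as [[Hl|Hl]|Hl].
  - exfalso. assert (Hx : INR (S np) <= INR nq) by (apply le_INR; lia). rewrite S_INR in Hx; lra.
  - subst. apply Hi; auto; lra.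
  - exfalso. assert (Hx : INR (S nq) <= INR np) by (apply le_INR; lia). rewrite S_INR in Hx; lra.
Qed.

Lemma ball_fin {V} (a : V -> V -> Prop) : locally_finite a ->
  forall k v, exists L, forall u, dist_le a v u k -> In u L.
Proof.
  intros LF; induction k; intros v.
  - exists (v :: nil). intros u [m [Hm W]]. assert (m = 0%nat) by lia; subst.
    apply walk_0_inv in W; subst; left; auto.
  - destruct (LF v) as [Lv HLv].
    assert (exists L', forall w, In w Lv -> forall u, dist_le a w u k -> In u L') as [L' HL'].
    { clear HLv. induction Lv as [|x Lv IH].
      - exists nil; intros w [].
      - destruct IH as [L1 H1]. destruct (IHk x) as [L2 H2]. exists (L2 ++ L1).
        intros w [<-|Hw] u Hu; apply in_or_app; eauto. }
    exists (v :: L'). intros u [m [Hm W]]. destruct m.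
    + apply walk_0_inv in W; subst; left; auto.
    + destruct (walk_S_inv _ _ _ _ W) as [w [Hvw Ww]]. right.
      apply HL' with w; [apply HLv; auto | exists m; split; [lia|auto]].
Qed.

Lemma list_min {A} (P : A -> Prop) (le : A -> A -> Prop)
  (tot : forall x y, P x -> P y -> le x y \/ le y x)
  (trans : forall x y z, P x -> P y -> P z -> le x y -> le y z -> le x z)
  (refl : forall x, le x x) (L : list A) :
  (exists x, In x L /\ P x) -> exists x, In x L /\ P x /\ forall y, In y L -> P y -> le x y.
Proof.
  induction L as [|z L IH]; intros [x [Hx Px]]. destruct Hx.
  destruct (classic (exists x, In x L /\ P x)) as [E|E].
  - destruct (IH E) as [m [Hm [Pm Hmin]]].
    destruct (classic (P z)) as [Pz|Pz].
    + destruct (tot m z Pm Pz) as [H|H].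
      * exists m; split; [right; auto| split; auto]. intros y [<-|Hy] Py; auto.
      * exists z; split; [left; auto| split; auto]. intros y [<-|Hy] Py; auto.
        apply trans with m; auto.
    + exists m; split; [right; auto| split; auto]. intros y [<-|Hy] Py; auto. contradiction.
  - destruct Hx as [<-|Hx]; [|exfalso; eauto].
    exists z; split; [left; auto| split; auto]. intros y [<-|Hy] Py; auto.
    exfalso; eauto.
Qed.

Lemma vor_exists {V} (a : V -> V -> Prop) SS l h :
  locally_finite a -> net_covering a (fun _ => True) SS h -> good_label SS l ->
  forall v, exists s, vor_min a SS l v s.
Proof.
  intros LF Cov [Hb Hi] v.
  destruct (Cov v I) as [s0 [Ss0 D0]]. destruct (ball_fin a LF h v) as [L HL].
  set (P := fun t => SS t /\ dist_le a v t h).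
  set (le := fun t t' => forall n n', is_dist a v t n -> is_dist a v t' n' ->
                                 INR n + l t <= INR n' + l t').
  destruct (list_min P le) with (L := L) as [t [Ht [Pt Hmin]]].
  - intros x y [_ Dx] [_ Dy].
    destruct (dist_exists _ _ _ _ Dx) as [nx Hx]; destruct (dist_exists _ _ _ _ Dy) as [ny Hy].
    destruct (Rle_dec (INR nx + l x) (INR ny + l y)) as [Hr|Hr].
    + left; intros n n' D D'. rewrite (is_dist_unique _ _ _ _ _ D Hx), (is_dist_unique _ _ _ _ _ D' Hy); auto.
    + right; intros n n' D D'. rewrite (is_dist_unique _ _ _ _ _ D Hy), (is_dist_unique _ _ _ _ _ D' Hx); lra.
  - intros x y z _ [_ Dy] _ Hxy Hyz n n'' Dx Dz.
    destruct (dist_exists _ _ _ _ Dy) as [ny Hy].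
    specialize (Hxy _ _ Dx Hy); specialize (Hyz _ _ Hy Dz); lra.
  - intros x n n' D D'. rewrite (is_dist_unique _ _ _ _ _ D D'); lra.
  - exists s0; split; [apply HL; auto| split; auto].
  - exists t. destruct Pt as [St Dt]. split; auto.
    destruct (dist_exists _ _ _ _ Dt) as [nt Hnt]. exists nt; split; auto.
    intros s' n' Ss' Ds'.
    destruct (le_lt_dec n' h).
    + apply Hmin; auto. apply HL. destruct Ds' as [D' _]. eapply dist_le_mono; eauto.
      split; auto. destruct Ds' as [D' _]. eapply dist_le_mono; eauto.
    + destruct (dist_exists _ _ _ _ D0) as [n0 Hn0].
      assert (Hts : le t s0) by (apply Hmin; [apply HL; auto | split; auto]).
      specialize (Hts _ _ Hnt Hn0).
      assert (n0 <= h)%nat by (apply (proj2 Hn0); auto).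
      assert (S h <= n')%nat by lia.
      apply le_INR in H; apply le_INR in H0. rewrite S_INR in H0.
      destruct (Hb _ Ss0); destruct (Hb _ Ss'); lra.
Qed.

Lemma cell_sym {V} (adj : V -> V -> Prop) S1 l1 (sym : forall x y, adj x y -> adj y x) :
  forall x y, cell_graph adj S1 l1 x y -> cell_graph adj S1 l1 y x.
Proof.
  intros x y [A [B [C [u [w [D [E F]]]]]]]. split; auto; split; auto; split; auto.
  exists w, u; auto.
Qed.

Lemma cells_walk {V} (adj : V -> V -> Prop) S1 l1 h :
  locally_finite adj -> net_covering adj (fun _ => True) S1 h -> good_label S1 l1 ->
  forall m u w, walk adj u w m -> forall p q, vor_min adj S1 l1 u p ->
  vor_min adj S1 l1 w q -> dist_le (cell_graph adj S1 l1) p q m.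
Proof.
  intros LF Cov GL; induction m; intros u w W p q Vp Vq.
  - apply walk_0_inv in W; subst. rewrite (vor_unique _ _ _ _ _ _ GL Vp Vq).
    exists 0%nat; split; auto; constructor.
  - destruct (walk_S_inv _ _ _ _ W) as [x [Hux Wx]].
    destruct (vor_exists adj S1 l1 h LF Cov GL x) as [c Vc].
    destruct (IHm _ _ Wx c q Vc Vq) as [k [Hk Wk]].
    destruct (classic (p = c)) as [E|E].
    + subst. exists k; split; auto.
    + exists (S k); split; [lia|]. econstructor; eauto.
      split; [apply Vp|split; [apply Vc|split; auto]]. exists u, x; auto.
Qed.

Lemma lift_cell {V} (adj : V -> V -> Prop) S1 l1 S2 l2 s p x :
  vor_min (cell_graph adj S1 l1) S2 l2 p s -> vor_min adj S1 l1 x p ->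
  exists k, walk (induced adj (cell2 adj S1 l1 S2 l2 s)) x p k.
Proof.
  intros Cp Vx. destruct Vx as [Sp [n [Dn Hn]]].
  assert (Vx : vor_min adj S1 l1 x p) by (split; auto; exists n; auto).
  exists n. eapply walk_mono; [|apply geo; eauto; apply is_dist_walk; auto].
  intros a b [A [B C]]. split; auto. split; exists p; auto.
Qed.

Lemma conv {V} (adj : V -> V -> Prop) S1 l1 S2 l2 s (sym : forall x y, adj x y -> adj y x) :
  forall m a b, walk (induced (cell_graph adj S1 l1) (fun x => vor_min (cell_graph adj S1 l1) S2 l2 x s)) a b m ->
  exists k, walk (induced adj (cell2 adj S1 l1 S2 l2 s)) a b k.
Proof.
  induction 1. exists 0%nat; constructor.
  destruct H as [[Su [Sw [Ne [x [y [Vx [Vy Axy]]]]]]] [Cu Cw]].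
  destruct IHwalk as [k3 W3].
  destruct (lift_cell _ _ _ _ _ _ _ _ Cu Vx) as [k1 W1].
  destruct (lift_cell _ _ _ _ _ _ _ _ Cw Vy) as [k2 W2].
  apply walk_rev in W1; [|apply induced_sym; auto].
  exists (k1 + (S k2 + k3))%nat. apply walk_app with x; auto.
  econstructor. split; [exact Axy| split; [exists u; auto | exists w; auto]].
  apply walk_app with w; auto.
Qed.

Theorem claim5p4 (V : Type) (adj : V -> V -> Prop) (h Rad : nat)
  (S1 : V -> Prop) (l1 : V -> R) (S2 : V -> Prop) (l2 : V -> R) :
  simple_graph adj -> locally_finite adj ->
  (exists k, h = (2 * k)%nat) -> (0 < h)%nat -> (0 < Rad)%nat ->
  separated adj S1 h -> net_covering adj (fun _ => True) S1 h -> good_label S1 l1 ->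
  (forall s, S2 s -> S1 s) ->
  separated (cell_graph adj S1 l1) S2 Rad ->
  net_covering (cell_graph adj S1 l1) S1 S2 Rad -> good_label S2 l2 ->
  forall s, S2 s ->
    connected_in adj (cell2 adj S1 l1 S2 l2 s) /\
    forall v n, is_dist adj s v n ->
      (Z.of_nat n <= Z.of_nat (Rad / 2) - Z.of_nat h)%Z ->
      cell2 adj S1 l1 S2 l2 s v.
Proof.
  intros [sym _] LF _ _ _ _ Cov GL1 S21 Sep2 _ GL2 s Ss.
  assert (S1s : S1 s) by auto.
  assert (toS : forall u, cell2 adj S1 l1 S2 l2 s u ->
            exists k, walk (induced adj (cell2 adj S1 l1 S2 l2 s)) u s k).
  { intros u [s1 [Vu Cs1]].
    destruct (lift_cell _ _ _ _ _ _ _ _ Cs1 Vu) as [k1 W1].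
    destruct Cs1 as [S2s [d [Dd Hd]]].
    assert (Cs1 : vor_min (cell_graph adj S1 l1) S2 l2 s1 s) by (split; auto; exists d; auto).
    destruct (conv adj S1 l1 S2 l2 s sym d s1 s) as [k2 W2].
    { apply geo; auto. apply is_dist_walk; auto. }
    exists (k1 + k2)%nat. apply walk_app with s1; auto. }
  split.
  - intros u w Hu Hw. destruct (toS u Hu) as [k1 W1]. destruct (toS w Hw) as [k2 W2].
    apply walk_rev in W2; [|apply induced_sym; auto].
    exists (k1 + k2)%nat. apply walk_app with s; auto.
  - intros v n Dn HZ.
    assert (HnR : (n <= Rad / 2)%nat) by lia.
    pose proof (Nat.mul_div_le Rad 2).
    destruct (vor_exists adj S1 l1 h LF Cov GL1 v) as [s1 Vs1].
    assert (Wv : walk adj v s n) by (apply walk_rev; auto; apply is_dist_walk; auto).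
    pose proof (cells_walk adj S1 l1 h LF Cov GL1 n v s Wv s1 s Vs1 (vor_self _ _ _ _ GL1 S1s)) as DG.
    destruct (dist_exists _ _ _ _ DG) as [d Dd].
    assert (d <= n)%nat by (apply (proj2 Dd); auto).
    exists s1; split; auto. split; auto. exists d; split; auto.
    intros s' n' S2s' D'.
    destruct (classic (s = s')) as [E|E].
    + subst. rewrite (is_dist_unique _ _ _ _ _ Dd D'); lra.
    + assert (Hdn : (Rad < d + n')%nat).
      { destruct (le_lt_dec (d + n') Rad) as [Hl|Hl]; auto. exfalso.
        apply (Sep2 s s' Ss S2s' E). exists (d + n')%nat; split; auto.
        apply walk_app with s1.
        - apply walk_rev; [apply cell_sym; auto| apply is_dist_walk; auto].
        - apply is_dist_walk; auto. }
      assert (S d <= n')%nat by lia.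
      apply le_INR in H1; rewrite S_INR in H1.
      destruct GL2 as [Hb _]. destruct (Hb _ Ss); destruct (Hb _ S2s'); lra.
Qed.
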